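(* Let $G$ be a finitely generated infinite group and let $V$ be a finite-dimensional vector space. Let $\tau\in\mathrm{LNUCA}_c(G,V)$ be stably injective and let $\Gamma=\tau(V^G)$. Then there exists a finite subset $N\subset G$ such that for every $d\in\Gamma$ and every $g\in G$, the element $\tau^{-1}(d)(g)\in V$ depends only on the restriction $d\vert_{gN}$.
   Context: For $g\in G$ and $x\in V^G$, $(gx)(h)=x(g^{-1}h)$. For finite $M\subset G$, $S=\mathcal{L}(V^M,V)$ and $s\in S^G$, $\sigma_s\colon V^G\to V^G$ is $\sigma_s(x)(g)=s(g)((g^{-1}x)\vert_M)$. $\mathrm{LNUCA}_c(G,V)$ is the set of maps $\sigma_s$ with $M$ finite and $s$ constant outside some finite subset of $G$. For $s\in S^G$, $\Sigma(s)$ is the closure of $\{gs:g\in G\}$ in $S^G$ for the prodiscrete topology (with $(gs)(h)=s(g^{-1}h)$). $\tau=\sigma_s$ is stably injective if $\sigma_p$ is injective for every $p\in\Sigma(s)$ (in particular $\tau$ is injective, so $\tau^{-1}(d)$ is well defined for $d\in\Gamma$). *)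

(* Defs.v *)
From HB Require Import structures.
From mathcomp Require Import all_boot all_order all_algebra.
Set Implicit Arguments. Unset Strict Implicit. Unset Printing Implicit Defensive.
Import GRing.Theory.
Local Open Scope ring_scope.

Record group := Group {
  gcar :> eqType;
  gmul : gcar -> gcar -> gcar;
  gone : gcar;
  ginv : gcar -> gcar;
  gmulA : forall a b c, gmul a (gmul b c) = gmul (gmul a b) c;
  gmul1l : forall a, gmul gone a = a;
  gmulVl : forall a, gmul (ginv a) a = gone }.

Section Defs.
Variable G : group.

Inductive generated_by (S : seq G) : G -> Prop :=
  | gen_one : generated_by S (gone G)
  | gen_mul : forall s g, s \in S -> generated_by S g -> generated_by S (gmul s g)
  | gen_mulV : forall s g, s \in S -> generated_by S g -> generated_by S (gmul (ginv s) g).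

Definition finitely_generated : Prop :=
  exists S : seq G, forall g : G, generated_by S g.

Definition infinite_group : Prop :=
  ~ (exists E : seq G, forall g : G, g \in E).

Variables (K : fieldType) (V : vectType K).

(* M is a finite subset of G, given as a finite family M : 'I_n -> G;
   V^M is {ffun 'I_n -> V}; S = L(V^M, V). *)
Definition locrule (n : nat) := {linear {ffun 'I_n -> V} -> V}.

Definition gact (g : G) (x : G -> V) : G -> V := fun h => x (gmul (ginv g) h).

Definition restr n (M : 'I_n -> G) (x : G -> V) : {ffun 'I_n -> V} :=
  [ffun i => x (M i)].

Definition sigma n (M : 'I_n -> G) (s : G -> locrule n) (x : G -> V) : G -> V :=
  fun g => s g (restr M (gact (ginv g) x)).

Definition sact n (g : G) (s : G -> locrule n) : G -> locrule n :=
  fun h => s (gmul (ginv g) h).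

Definition asympt_const n (s : G -> locrule n) : Prop :=
  exists (E : seq G) (s0 : locrule n), forall g, g \notin E -> s g = s0.

(* p in Sigma(s): p lies in the closure of the orbit {g s} for the
   prodiscrete topology on S^G, i.e. every basic open neighbourhood
   {q | q = p on F}, F finite, meets the orbit. *)
Definition in_Sigma n (s p : G -> locrule n) : Prop :=
  forall F : seq G, exists g : G, forall h, h \in F -> sact g s h = p h.

Definition stably_injective n (M : 'I_n -> G) (s : G -> locrule n) : Prop :=
  forall p, in_Sigma s p -> injective (sigma M p).

End Defs.

(* Main.v *)
Require Import Defs.
From HB Require Import structures.
From mathcomp Require Import all_boot all_order all_algebra.
From Stdlib Require Import Classical ClassicalEpsilon FunctionalExtensionality.
From mathcomp Require Import zify.
Set Implicit Arguments. Unset Strict Implicit. Unset Printing Implicit Defensive.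
Import GRing.Theory.
Local Open Scope ring_scope.

Lemma gmulV (G : group) (a : G) : gmul a (ginv a) = gone G.
Proof.
rewrite -[gmul a _]gmul1l -{1}(gmulVl (ginv a)) -gmulA.
by rewrite [gmul (ginv a) (gmul a _)]gmulA gmulVl gmul1l gmulVl.
Qed.

Lemma gmul1r (G : group) (a : G) : gmul a (gone G) = a.
Proof. by rewrite -(gmulVl a) gmulA gmulV gmul1l. Qed.

Lemma ginvK (G : group) (a : G) : ginv (ginv a) = a.
Proof. by rewrite -[RHS]gmul1l -(gmulVl (ginv a)) -gmulA gmulVl gmul1r. Qed.

Lemma ginv1 (G : group) : ginv (gone G) = gone G.
Proof. by rewrite -[LHS]gmul1r gmulVl. Qed.

Lemma sigmaD (G : group) (K : fieldType) (V : vectType K) n (M : 'I_n -> G)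
  (p : G -> locrule V n) (z1 z2 : G -> V) h :
  sigma M p (fun x => z1 x + z2 x) h = sigma M p z1 h + sigma M p z2 h.
Proof.
rewrite /sigma -linearD; congr (p h _); apply/ffunP => i.
by rewrite /restr /gact !ffunE.
Qed.

Lemma sigmaZ (G : group) (K : fieldType) (V : vectType K) n (M : 'I_n -> G)
  (p : G -> locrule V n) (c : K) (z : G -> V) h :
  sigma M p (fun x => c *: z x) h = c *: sigma M p z h.
Proof.
rewrite /sigma -linearZ; congr (p h _); apply/ffunP => i.
by rewrite /restr /gact !ffunE.
Qed.

Lemma sigmaN (G : group) (K : fieldType) (V : vectType K) n (M : 'I_n -> G)
  (p : G -> locrule V n) (z : G -> V) h :
  sigma M p (fun x => - z x) h = - sigma M p z h.
Proof.
rewrite /sigma -linearN; congr (p h _); apply/ffunP => i.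
by rewrite /restr /gact !ffunE.
Qed.

Lemma sigma0 (G : group) (K : fieldType) (V : vectType K) n (M : 'I_n -> G)
  (p : G -> locrule V n) h :
  sigma M p (fun _ => 0) h = 0.
Proof.
rewrite /sigma.
have -> : restr M (gact (ginv h) (fun _ => 0 : V)) = 0.
  by apply/ffunP => i; rewrite !ffunE.
exact: linear0.
Qed.

Lemma sigma_ext (G : group) (K : fieldType) (V : vectType K) n (M : 'I_n -> G)
  (p : G -> locrule V n) (z1 z2 : G -> V) h :
  (forall i, z1 (gmul h (M i)) = z2 (gmul h (M i))) ->
  sigma M p z1 h = sigma M p z2 h.
Proof.
move=> E; rewrite /sigma; congr (p h _); apply/ffunP => i.
by rewrite /restr /gact !ffunE ginvK.
Qed.

Lemma min_ex (Q : nat -> Prop) : (exists k, Q k) ->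
  exists k, Q k /\ forall j, Q j -> (k <= j)%N.
Proof.
move=> [k Qk]; apply: NNPP => H.
suff: forall m j, (j <= m)%N -> ~ Q j by move/(_ k k (leqnn k)).
elim=> [|m IH] j.
  rewrite leqn0 => /eqP -> Q0; apply: H; exists 0%N; split=> // i _.
rewrite leq_eqVlt => /orP [/eqP -> Qm|]; last by apply: IH.
apply: H; exists m.+1; split=> // i Qi; rewrite leqNgt; apply/negP => lt.
exact: (IH i lt).
Qed.

Definition subsp (K : fieldType) (V : vectType K) (Q : V -> Prop) :=
  [/\ Q 0, (forall a b, Q a -> Q b -> Q (a + b)) & (forall c a, Q a -> Q (c *: a))].

Lemma vs_of (K : fieldType) (V : vectType K) (Q : V -> Prop) : subsp Q ->
  exists U : {vspace V}, forall v, v \in U <-> Q v.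
Proof.
move=> [Q0 QD QZ].
have h0 : forall v : V, v \in (0%VS : {vspace V}) -> Q v.
  by move=> v; rewrite memv0 => /eqP ->.
have [j [[U [UQ ->]] jmin]] := @min_ex (fun j => exists U : {vspace V},
    (forall v, v \in U -> Q v) /\ j = (\dim (fullv : {vspace V}) - \dim U)%N)
  (ex_intro _ _ (ex_intro _ (0%VS) (conj h0 erefl))).
exists U => v; split; first exact: UQ.
move=> Qv; apply: NNPP => vU.
have sUU' : (U <= U + <[v]>)%VS by exact: addvSl.
have lt : (\dim U < \dim (U + <[v]>))%N.
  rewrite ltn_neqAle (dimv_leqif_sup sUU').2 dimvS // andbT.
  apply/negP => /subvP sub; apply: vU; apply: sub.
  by have := memv_add (mem0v U) (memv_line v); rewrite add0r.
have dle := dimvS (subvf (U + <[v]>)%VS).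
have le : (\dim (fullv : {vspace V}) - \dim U <= \dim (fullv : {vspace V}) - \dim (U + <[v]>))%N.
  apply: jmin.
  exists (U + <[v]>)%VS; split=> // x /memv_addP [y yU [w /vlineP [k ->] ->]].
  by apply: QD; [apply: UQ | apply: QZ].
by move: le dle lt; clear; lia.
Qed.

Lemma sigmaB (G : group) (K : fieldType) (V : vectType K) n (M : 'I_n -> G)
  (p : G -> locrule V n) (z1 z2 : G -> V) h :
  sigma M p (fun x => z1 x - z2 x) h = sigma M p z1 h - sigma M p z2 h.
Proof.
rewrite /sigma -linearB; congr (p h _); apply/ffunP => i.
by rewrite /restr /gact !ffunE.
Qed.

Lemma stab (T : eqType) (K : fieldType) (V : vectType K) (P : seq T -> V -> Prop)
  (sub : forall N, subsp (P N))
  (mono : forall N N', {subset N <= N'} -> forall v, P N' v -> P N v) :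
  exists Ns, forall N, {subset Ns <= N} -> forall v, P Ns v -> P N v.
Proof.
have [k [[Ns [U [dU HU]]] kmin]] := @min_ex (fun k => exists Ns, exists U : {vspace V},
   \dim U = k /\ forall v, v \in U <-> P Ns v)
   (let (U, HU) := vs_of (sub [::]) in ex_intro _ _ (ex_intro _ [::] (ex_intro _ U (conj erefl HU)))).
exists Ns => N sN v Pv.
have [U' HU'] := vs_of (sub N).
have sUU : (U' <= U)%VS.
  by apply/subvP => x /HU' Px; apply/HU; exact: (mono _ _ sN).
have dle : (\dim U <= \dim U')%N.
  rewrite dU; apply: kmin; exists N, U'; split=> //.
have /eqP eqU : U' == U by rewrite eqEdim sUU dle.
by apply/HU'; rewrite eqU; apply/HU.
Qed.

Definition good (G : group) (K : fieldType) (V : vectType K) n (M : 'I_n -> G)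
  (p : G -> locrule V n) (D : seq G) (u : G -> V) :=
  forall N : seq G, exists z : G -> V, (forall d, d \in D -> z d = u d) /\
     (forall h, h \in N -> sigma M p z h = 0).

Lemma ext_good (G : group) (K : fieldType) (V : vectType K) n (M : 'I_n -> G)
  (p : G -> locrule V n) (D : seq G) (u : G -> V) :
  good M p D u -> forall h0, exists u' : G -> V,
    (forall d, d \in D -> u' d = u d) /\ good M p (h0 :: D) u'.
Proof.
move=> gu h0.
pose P (N : seq G) (v : V) := exists z : G -> V, (forall d, d \in D -> z d = 0) /\
   (forall h, h \in N -> sigma M p z h = 0) /\ z h0 = v.
have [Ns HNs] : exists Ns, forall N, {subset Ns <= N} -> forall v, P Ns v -> P N v.
  apply: stab.
    move=> N; split.
    - by exists (fun _ => 0); split=> //; split=> // h _; rewrite sigma0.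
    - move=> a b [z1 [D1 [S1 E1]]] [z2 [D2 [S2 E2]]].
      exists (fun x => z1 x + z2 x); split; first by move=> d dD; rewrite D1 // D2 // addr0.
      split; last by rewrite E1 E2.
      by move=> h hN; rewrite sigmaD S1 // S2 // addr0.
    - move=> c a [z1 [D1 [S1 E1]]].
      exists (fun x => c *: z1 x); split; first by move=> d dD; rewrite D1 // scaler0.
      split; last by rewrite E1.
      by move=> h hN; rewrite sigmaZ S1 // scaler0.
  move=> N N' sN v [z [D1 [S1 E1]]]; exists z; split=> //; split=> // h hN.
  exact/S1/sN.
have [z1 [D1 S1]] := gu Ns.
pose a := z1 h0.
exists (fun x => if x == h0 then a else u x); split.
  by move=> d dD; case: eqP => // E; rewrite /a -E D1.
move=> N.
have [z2 [D2 S2]] := gu (Ns ++ N).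
have sub1 : {subset Ns <= Ns ++ N} by move=> x xN; rewrite mem_cat xN.
have sub2 : {subset N <= Ns ++ N} by move=> x xN; rewrite mem_cat xN orbT.
have P1 : P Ns (a - z2 h0).
  exists (fun x => z1 x - z2 x); split; first by move=> d dD; rewrite D1 // D2 // subrr.
  split=> // h hN; rewrite sigmaB S1 // S2 ?subrr //; exact: sub1.
have [z3 [D3 [S3 E3]]] := HNs _ sub1 _ P1.
exists (fun x => z2 x + z3 x); split.
  move=> d; rewrite inE; case: eqP => [-> _|_ /= dD].
    by rewrite E3 addrC subrK.
  by rewrite D2 // D3 // addr0.
by move=> h hN; rewrite sigmaD S2 ?S3 ?addr0 //; exact: sub2.
Qed.

Definition extu (G : group) (K : fieldType) (V : vectType K) n (M : 'I_n -> G)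
  (p : G -> locrule V n) (D : seq G) (u : G -> V) (h0 : G) : G -> V :=
  epsilon (inhabits u) (fun u' => (forall d, d \in D -> u' d = u d) /\ good M p (h0 :: D) u').

Fixpoint Dk (G : group) (e : nat -> G) (g : G) (k : nat) : seq G :=
  if k is k'.+1 then e k' :: Dk e g k' else [:: g].

Fixpoint uk (G : group) (K : fieldType) (V : vectType K) n (M : 'I_n -> G)
  (p : G -> locrule V n) (e : nat -> G) (g : G) (w : V) (k : nat) : G -> V :=
  if k is k'.+1 then extu M p (Dk e g k') (uk M p e g w k') (e k') else fun _ => w.

Lemma core (G : group) (K : fieldType) (V : vectType K) n (M : 'I_n -> G)
  (p : G -> locrule V n) (e : nat -> G) (esurj : forall h, exists k, e k = h)
  (injp : injective (sigma M p)) (g : G) :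
  exists N : seq G, forall z : G -> V,
    (forall h, h \in N -> sigma M p z h = 0) -> z g = 0.
Proof.
apply: NNPP => H.
have Hbad : forall N : seq G, exists z : G -> V,
    (forall h, h \in N -> sigma M p z h = 0) /\ z g != 0.
  move=> N; apply: NNPP => H2; apply: H; exists N => z Hz; apply: NNPP => zg.
  by apply: H2; exists z; split => //; apply/eqP.
pose P (N : seq G) (v : V) := exists z : G -> V, z g = v /\
   (forall h, h \in N -> sigma M p z h = 0).
have [Ns HNs] : exists Ns, forall N, {subset Ns <= N} -> forall v, P Ns v -> P N v.
  apply: stab.
    move=> N; split.
    - by exists (fun _ => 0); split=> // h _; rewrite sigma0.
    - move=> a b [z1 [E1 S1]] [z2 [E2 S2]].
      exists (fun x => z1 x + z2 x); split; first by rewrite E1 E2.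
      by move=> h hN; rewrite sigmaD S1 // S2 // addr0.
    - move=> c a [z1 [E1 S1]].
      exists (fun x => c *: z1 x); split; first by rewrite E1.
      by move=> h hN; rewrite sigmaZ S1 // scaler0.
  move=> N N' sN v [z [E1 S1]]; exists z; split=> // h hN.
  exact/S1/sN.
have [z0 [S0 nz0]] := Hbad Ns.
pose w := z0 g.
have good0 : good M p [:: g] (fun _ => w).
  move=> N.
  have sub1 : {subset Ns <= Ns ++ N} by move=> x xN; rewrite mem_cat xN.
  have [z [E1 S1]] := HNs _ sub1 w (ex_intro _ z0 (conj erefl S0)).
  exists z; split; first by move=> d; rewrite inE => /eqP ->.
  by move=> h hN; apply: S1; rewrite mem_cat hN orbT.
pose D := Dk e g.
pose u := uk M p e g w.
have step : forall k, good M p (D k) (u k) /\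
    (forall d, d \in D k -> u k.+1 d = u k d) /\ good M p (D k.+1) (u k.+1).
  elim=> [|k [_ [_ IH]]].
    have := epsilon_spec (inhabits (fun _ : G => w))
      (fun u' => (forall d, d \in [:: g] -> u' d = w) /\ good M p (e 0%N :: [:: g]) u')
      (ext_good good0 (e 0%N)).
    by case=> A B; split=> //.
  have := epsilon_spec (inhabits (u k.+1))
      (fun u' => (forall d, d \in D k.+1 -> u' d = u k.+1 d) /\ good M p (e k.+1 :: D k.+1) u')
      (ext_good IH (e k.+1)).
  by case=> A B; split.
have subD : forall k m, (k <= m)%N -> {subset D k <= D m}.
  move=> k m; elim: m => [|m IHm]; first by rewrite leqn0 => /eqP ->.
  rewrite leq_eqVlt => /orP [/eqP -> //|lt] x xk.
  by rewrite /D /= inE (IHm lt x xk) orbT.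
have agree : forall k m, (k <= m)%N -> forall d, d \in D k -> u m d = u k d.
  move=> k m; elim: m => [|m IHm]; first by rewrite leqn0 => /eqP ->.
  rewrite leq_eqVlt => /orP [/eqP -> //|lt] d dk.
  have [_ [A _]] := step m.
  by rewrite A ?(IHm lt) //; exact: subD dk.
pose idx (h : G) := epsilon (inhabits 0%N) (fun k => e k = h).
have idxP : forall h, e (idx h) = h.
  by move=> h; apply: (epsilon_spec (inhabits 0%N) (fun k => e k = h)).
pose z (h : G) := u (idx h).+1 h.
have inD : forall h, h \in D (idx h).+1 by move=> h; rewrite /D /= inE idxP eqxx.
have zP : forall h m, ((idx h).+1 <= m)%N -> z h = u m h.
  by move=> h m le; rewrite /z (agree _ _ le).
have zg : z g = w.
  rewrite (zP g _ (leqnn _)) (agree 0%N) //.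
  by rewrite /D /= inE eqxx.
have zs : forall h, sigma M p z h = 0.
  move=> h.
  pose Kb := (\max_(i < n) (idx (gmul h (M i))).+1)%N.
  have [z' [A B]] := (proj1 (step Kb)) [:: h].
  rewrite -(B h (mem_head _ _)); apply: sigma_ext => i.
  have le : ((idx (gmul h (M i))).+1 <= Kb)%N by exact: (leq_bigmax (F := fun i => (idx (gmul h (M i))).+1)).
  rewrite (zP _ _ le) A //.
  exact: subD le _ (inD _).
have : z = (fun _ => 0).
  apply: injp; apply: functional_extensionality => h; by rewrite zs sigma0.
by move=> /(congr1 (fun f => f g)); rewrite zg => wz; move: nz0; rewrite -/w wz eqxx.
Qed.

Definition evalw (G : group) (S : seq G) (w : seq (bool * nat)) : G :=
  foldr (fun bi x => gmul (if bi.1 then ginv (nth (gone G) S bi.2)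
                           else nth (gone G) S bi.2) x) (gone G) w.

Lemma evalw_gen (G : group) (S : seq G) g : generated_by S g ->
  exists w, evalw S w = g.
Proof.
elim=> [|s x sS _ [w <-]|s x sS _ [w <-]]; first by exists [::].
  by exists ((false, index s S) :: w); rewrite /= nth_index.
by exists ((true, index s S) :: w); rewrite /= nth_index.
Qed.

Lemma enum_fg (G : group) : finitely_generated G ->
  exists e : nat -> G, forall h, exists k, e k = h.
Proof.
move=> [S gS].
exists (fun k => if (unpickle k : option (seq (bool * nat))) is Some w then evalw S w else gone G).
move=> h; have [w <-] := evalw_gen (gS h).
by exists (pickle w); rewrite pickleK.
Qed.

Lemma near_list (G : group) (K : fieldType) (V : vectType K) n (M : 'I_n -> G)
  (p : G -> locrule V n) (e : nat -> G) (esurj : forall h, exists k, e k = h)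
  (injp : injective (sigma M p)) (L : seq G) :
  exists NL : seq G, forall f, f \in L -> forall z : G -> V,
    (forall h, h \in NL -> sigma M p z (gmul f h) = 0) -> z f = 0.
Proof.
elim: L => [|f L [NL HL]]; first by exists [::].
have [Nf Hf] := core esurj injp f.
exists ([seq gmul (ginv f) x | x <- Nf] ++ NL) => f'; rewrite inE => /orP [/eqP ->|fL] z Hz.
  apply: Hf => h hN; rewrite -[h](gmul1l) -(gmulV f) -gmulA; apply: Hz.
  by rewrite mem_cat map_f.
by apply: HL => // h hN; apply: Hz; rewrite mem_cat hN orbT.
Qed.

Local Close Scope ring_scope.

Theorem lemma4p1 (G : group) (K : fieldType) (V : vectType K)
  (fgG : finitely_generated G) (infG : infinite_group G)
  (n : nat) (M : 'I_n -> G) (s : G -> locrule V n)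
  (hs : asympt_const s) (hinj : stably_injective M s) :
  exists N : seq G, forall (x y : G -> V) (g : G),
    (forall h, h \in N -> sigma M s x (gmul g h) = sigma M s y (gmul g h)) ->
    x g = y g.
Proof.
move: hs => [E [s0 Hs]].
have [e esurj] := enum_fg fgG.
pose c := fun _ : G => s0.
have cS : in_Sigma s c.
  move=> F.
  pose L := [seq gmul e' (ginv h) | e' <- E, h <- F].
  have [a aL] : exists a, a \notin L.
    apply: NNPP => H; apply: infG; exists L => a; apply: NNPP => aL.
    by apply: H; exists a; apply/negP.
  exists (ginv a) => h hF; rewrite /sact ginvK /c; apply: Hs.
  apply/negP => ahE; move: aL; rewrite (_ : a = gmul (gmul a h) (ginv h)).
    by rewrite (allpairs_f (fun e' h => gmul e' (ginv h)) ahE hF).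
  by rewrite -gmulA gmulV gmul1r.
have [N0 H0] := core esurj (hinj _ cS) (gone G).
have sS : in_Sigma s s.
  by move=> F; exists (gone G) => h _; rewrite /sact ginv1 gmul1l.
pose F := [seq gmul e' (ginv h) | e' <- E, h <- N0].
have [NF HF] := near_list esurj (hinj _ sS) F.
exists (N0 ++ NF) => x y g Hxy.
pose z := fun q => (x q - y q)%R.
have Hz : forall h, h \in N0 ++ NF -> sigma M s z (gmul g h) = 0%R.
  by move=> h hN; rewrite sigmaB Hxy // subrr.
suff : z g = 0%R by move/eqP; rewrite subr_eq0 => /eqP.
case gF: (g \in F).
  by apply: (HF g gF z) => h hN; apply: Hz; rewrite mem_cat hN orbT.
rewrite -[g]gmul1r; apply: (H0 (fun q => z (gmul g q))) => h hN.
have notE : gmul g h \notin E.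
  apply/negP => ghE; move/negbT: gF; rewrite (_ : g = gmul (gmul g h) (ginv h)).
    by rewrite (allpairs_f (fun e' h => gmul e' (ginv h)) ghE hN).
  by rewrite -gmulA gmulV gmul1r.
rewrite -(Hz h); last by rewrite mem_cat hN.
rewrite /sigma /c (Hs _ notE); congr (s0 _); apply/ffunP => i.
by rewrite /restr /gact !ffunE !ginvK gmulA.
Qed.
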